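(* Let $N\ge1$, $h,\varepsilon\in(0,1)$, and let $\Phi$ be the opinion operator defined in the context. Let $0\le L\le N$ and let $P=(p_1,\dots,p_N)$ with $p_k=-1$ for $k\le L$ and $p_k=1$ for $k>L$ (a basic fixed point). Let $V^0\in[-1,1]^N$ have nondecreasing components and satisfy $\rho(V^0,P)\le 1-\varepsilon$, where $\rho(V,V')=\max_{1\le k\le N}|v_k-v_k'|$. Then there exists $n_0$ such that $\Phi^n(V^0)=P$ for all $n\ge n_0$.
   Context: For $V=(v_1,\dots,v_N)\in[-1,1]^N$ and each $k$, let $J(v_k)=\{l\in\{1,\dots,N\}:|v_l-v_k|\le\varepsilon\}$ and $I(v_k)=|J(v_k)|$. Put $w_k(V)=v_k+\frac{h}{I(v_k)}\sum_{l\in J(v_k)}v_l$. Then $\Phi(V)=(v_1',\dots,v_N')$ where $v_k'=-1$ if $w_k<-1$, $v_k'=1$ if $w_k>1$, and $v_k'=w_k$ if $|w_k|\le1$. *)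

(* Defs.v *)
(* Opinions are finite functions 'I_N -> R, R a realFieldType.
   Index k : 'I_N stands for the paper's index k+1 (0-based indices). *)
From mathcomp Require Import all_boot all_order all_algebra.
Set Implicit Arguments. Unset Strict Implicit. Unset Printing Implicit Defensive.
Import Order.TTheory GRing.Theory Num.Theory.
Local Open Scope ring_scope.

Section Opinion.
Variables (R : realFieldType) (N : nat) (h eps : R).

Definition Jset (V : {ffun 'I_N -> R}) (k : 'I_N) : {set 'I_N} :=
  [set l | `|V l - V k| <= eps].

Definition Icard (V : {ffun 'I_N -> R}) (k : 'I_N) : nat := #|Jset V k|.

Definition wk (V : {ffun 'I_N -> R}) (k : 'I_N) : R :=
  V k + h / (Icard V k)%:R * \sum_(l in Jset V k) V l.

Definition clip (w : R) : R :=
  if w < -1 then -1 else if 1 < w then 1 else w.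

Definition Phi (V : {ffun 'I_N -> R}) : {ffun 'I_N -> R} :=
  [ffun k => clip (wk V k)].

End Opinion.

Definition rho (R : realFieldType) (N : nat) (V W : {ffun 'I_N -> R}) : R :=
  \big[Num.max/0]_(k < N) `|V k - W k|.

(* basic fixed point: p_k = -1 for k <= L (1-based), i.e. 0-based index < L *)
Definition basicP (R : realFieldType) (N L : nat) : {ffun 'I_N -> R} :=
  [ffun k : 'I_N => if (k < L)%N then -1 else 1].

(* Main.v *)
Require Import Defs.
From mathcomp Require Import all_boot all_order all_algebra.
From mathcomp Require Import reals.
From mathcomp Require Import ring lra.
Import Order.TTheory GRing.Theory Num.Theory.
Local Open Scope ring_scope.

Section S.
Variables (R : realType) (N L : nat) (h eps : R).
Hypotheses (h0 : 0 < h) (e0 : 0 < eps) (e1 : eps < 1).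

Definition Inv (V : {ffun 'I_N -> R}) := forall k : 'I_N,
  if (k < L)%N then -1 <= V k <= -eps else eps <= V k <= 1.

Definition dist (V : {ffun 'I_N -> R}) (k : 'I_N) :=
  if (k < L)%N then V k + 1 else 1 - V k.

Lemma Jin (V : {ffun 'I_N -> R}) k : k \in Jset eps V k.
Proof. by rewrite inE subrr normr0 ltW. Qed.

Lemma mean_eq (V : {ffun 'I_N -> R}) k c :
  h / (Icard eps V k)%:R * \sum_(l in Jset eps V k) c = h * c.
Proof.
rewrite /Icard.
have Jp : (0 < #|Jset eps V k|)%N by apply/card_gt0P; exists k; exact: Jin.
have nz : (#|Jset eps V k|)%:R != 0 :> R by rewrite pnatr_eq0 -lt0n.
rewrite sumr_const -mulr_natr; field; exact: nz.
Qed.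

Lemma mean_le (V : {ffun 'I_N -> R}) k c : (forall l, l \in Jset eps V k -> V l <= c) ->
  h / (Icard eps V k)%:R * \sum_(l in Jset eps V k) V l <= h * c.
Proof.
move=> H; rewrite -(mean_eq V k c).
apply: ler_wpM2l; first by rewrite divr_ge0 // ?ltW // ler0n.
by apply: ler_sum.
Qed.

Lemma mean_ge (V : {ffun 'I_N -> R}) k c : (forall l, l \in Jset eps V k -> c <= V l) ->
  h * c <= h / (Icard eps V k)%:R * \sum_(l in Jset eps V k) V l.
Proof.
move=> H; rewrite -(mean_eq V k c).
apply: ler_wpM2l; first by rewrite divr_ge0 // ?ltW // ler0n.
by apply: ler_sum.
Qed.

Lemma stepk (V : {ffun 'I_N -> R}) (k : 'I_N) : Inv V ->
  (if (k < L)%N then -1 <= Phi h eps V k <= -eps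
   else eps <= Phi h eps V k <= 1) /\
  (dist (Phi h eps V) k = 0 \/ dist (Phi h eps V) k <= dist V k - h * eps).
Proof.
move=> IV; have H0 := h0; have E0 := e0; have E1 := e1; have hep : 0 < h * eps by rewrite mulr_gt0.
rewrite /dist; have := IV k; case: ifP => kL /andP[a b].
- have H : forall l, l \in Jset eps V k -> V l <= -eps.
    move=> l; rewrite inE => Hl; have := IV l.
    case: ifP => _ /andP[c d] //; exfalso.
    have Hd : V l - V k <= eps by exact: le_trans (ler_norm _) Hl.
    lra.
  have M := @mean_le V k _ H.
  rewrite ffunE /clip; set w := wk h eps V k.
  have wle : w <= V k - h * eps by rewrite /w /wk; lra.
  case: ifP => [_|/negbT]; first by split; [apply/andP; split; lra|left; lra].
  rewrite -leNgt => w1; rewrite ifN; last by rewrite -leNgt; lra.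
  by split; [apply/andP; split; lra|right; lra].
- have H : forall l, l \in Jset eps V k -> eps <= V l.
    move=> l; rewrite inE => Hl; have := IV l.
    case: ifP => _ /andP[c d] //; exfalso.
    have Hd : V k - V l <= eps by rewrite distrC in Hl; exact: le_trans (ler_norm _) Hl.
    lra.
  have M := @mean_ge V k _ H.
  rewrite ffunE /clip; set w := wk h eps V k.
  have wge : V k + h * eps <= w by rewrite /w /wk; lra.
  rewrite ifN; last by rewrite -leNgt; lra.
  case: ifP => [_|/negbT]; first by split; [apply/andP; split; lra|left; lra].
  rewrite -leNgt => w1.
  by split; [apply/andP; split; lra|right; lra].
Qed.

Lemma dist_ge0 (V : {ffun 'I_N -> R}) (k : 'I_N) : Inv V -> 0 <= dist V k.
Proof. move=> IV; have := IV k; rewrite /dist; case: ifP => _ /andP[a b]; lra. Qed.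

Lemma iter_inv (V0 : {ffun 'I_N -> R}) : Inv V0 -> (forall k, dist V0 k <= 1) -> forall n,
  Inv (iter n (Phi h eps) V0) /\
  forall k, dist (iter n (Phi h eps) V0) k = 0 \/
            dist (iter n (Phi h eps) V0) k <= 1 - n%:R * (h * eps).
Proof.
move=> I0 D0; elim=> [|n [IH DH]] /=.
  by split => // k; right; rewrite mul0r subr0.
split; first by move=> k; have [] := stepk _ k IH.
move=> k; have [_ [->|H]] := stepk _ k IH; first by left.
have G := dist_ge0 _ k IH.
have G' : 0 <= dist (Phi h eps (iter n (Phi h eps) V0)) k.
  apply: dist_ge0 => j; by have [] := stepk _ j IH.
have hep : 0 < h * eps by rewrite mulr_gt0.
right; rewrite -natr1 mulrDl mul1r.
have [E|E] := DH k; lra.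
Qed.

Lemma rho_ge (V W : {ffun 'I_N -> R}) k : `|V k - W k| <= rho V W.
Proof.
rewrite /rho.
have : k \in index_enum 'I_N by rewrite mem_index_enum.
elim: (index_enum 'I_N) => [|i s IH] //.
rewrite big_cons inE le_max => /orP[/eqP ->|/IH ->]; last by rewrite orbT.
by rewrite lexx.
Qed.

End S.

Theorem theorem1 (R : realType) (N : nat) (h eps : R) (L : nat)
    (V0 : {ffun 'I_N -> R}) :
  (1 <= N)%N ->
  0 < h < 1 -> 0 < eps < 1 ->
  (L <= N)%N ->
  (forall k, -1 <= V0 k <= 1) ->
  (forall k l : 'I_N, (k <= l)%N -> V0 k <= V0 l) ->
  rho V0 (basicP R N L) <= 1 - eps ->
  exists n0 : nat, forall n : nat, (n0 <= n)%N ->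
    iter n (Phi h eps) V0 = basicP R N L.
Proof.
move=> _ /andP[h0 h1] /andP[e0 e1] _ Vb _ Hr.
have I0 : @Inv R N L eps V0.
  move=> k; have := @rho_ge R N V0 (basicP R N L) k; rewrite ffunE.
  have /andP[a b] := Vb k.
  case: ifP => _; rewrite ler_norml => /andP[c d]; apply/andP; split; lra.
have D0 : forall k, @dist R N L V0 k <= 1.
  move=> k; have := I0 k; rewrite /dist; case: ifP => _ /andP[a b]; lra.
have hep : 0 < h * eps by rewrite mulr_gt0.
have x0 : 0 <= (h * eps)^-1 by rewrite invr_ge0 ltW.
set n0 := Num.Def.archi_bound (h * eps)^-1.
have Hn0 : (h * eps)^-1 < n0%:R by apply: archi_boundP.
exists n0 => n Hn.
have Hn' : 1 < n%:R * (h * eps).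
  have : n0%:R <= n%:R :> R by rewrite ler_nat.
  move=> Hle; rewrite -(@ltr_pM2r _ (h * eps)^-1) ?invr_gt0 //.
  rewrite mul1r -mulrA mulfV ?mulr1; last by rewrite gt_eqF.
  exact: lt_le_trans Hle.
have [IH DH] := @iter_inv R N L h eps h0 e0 e1 V0 I0 D0 n.
move: IH DH; set W := iter n _ V0; clearbody W => IH DH.
apply/ffunP => k; rewrite [RHS]ffunE.
have := DH k; have := IH k; rewrite /dist.
case: ifP => _ /andP[a b] [E|E]; move: (W k) a b E => x a b E; clear -a b E Hn' hep; lra.
Qed.
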